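(* Consider the discrete-time control system $x_{k+1}=f(x_k,u_k)$ with reward $r(x,u)=R-x^TQx$ under the standing assumptions (A1)–(A3) in the context. Let $\pi^\star$ be an optimal (feedback) policy for the discounted objective $\mathbf J^{\mathbf u}_\gamma$. Then there exists $\gamma^\star\in(0,1)$ such that for every $\gamma\in(\gamma^\star,1)$ the origin is an asymptotically stable equilibrium of the closed-loop system $x_{n+1}=f(x_n,\pi^\star(x_n))$.
   Context: System: $x_{k+1}=f(x_k,u_k)$, $x_k\in\mathbb R^n$, $u_k\in\mathcal U\subset\mathbb R^m$, origin an equilibrium; $\Psi(k,x_0,\mathbf u(k))$ is the state at time $k$ from $x_0$ under control sequence $\mathbf u$. (A1) $\|f(x,u)-f(y,w)\|\le L_x\|x-y\|+L_u\|u-w\|$. Reward $r(x,u)=R-x^TQx$, $R>0$ constant, $Q$ positive definite. For $\gamma\in(0,1)$: $\mathbf J^{\mathbf u}_\gamma(x_0)=\sum_{k\ge0}\gamma^k r(\Psi(k,x_0,\mathbf u(k)),\mathbf u(k))$, $V_\gamma(x_0)=\sup_{\mathbf u}\mathbf J^{\mathbf u}_\gamma(x_0)$. (A2) For every $x_0$ an optimal control sequence attaining $V_\gamma(x_0)$ exists. (A3) There is $a_V$ with $\frac{R}{1-\gamma}-V_\gamma(x)\le a_V\|x\|^2$ for all $\gamma\in(0,1)$, $x\in\mathbb R^n$. An optimal policy is a map $\pi^\star$ such that the closed-loop inputs $u_k=\pi^\star(x_k)$ attain $V_\gamma(x_0)$ for every $x_0$. Asymptotic stability of the origin for $x_{k+1}=f(x_k,\mathbf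 u(x_k))$: (1) for every $\epsilon>0$ there is $\delta>0$ such that $\|x_0\|<\delta$ implies $x_k$ is defined and $\|x_k\|<\epsilon$ for all $k$; (2) there is $\rho>0$ such that for every $\epsilon>0$ there is $N\in\mathbb N$ with $\|x_k\|<\epsilon$ for all $k\ge N$ whenever $\|x_0\|<\rho$. *)

(* Defs.v *)
From HB Require Import structures.
From mathcomp Require Import all_boot all_order all_algebra.
From mathcomp Require Import all_classical all_reals all_analysis.
Set Implicit Arguments. Unset Strict Implicit. Unset Printing Implicit Defensive.
Import Order.TTheory GRing.Theory Num.Theory.
Local Open Scope classical_set_scope.
Local Open Scope ring_scope.

Section ControlDefs.
Variables (R : realType) (n m : nat).

Definition enorm (x : 'cV[R]_n) : R := Num.sqrt (\sum_(i < n) x i ord0 ^+ 2).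

Definition quadf (Q : 'M[R]_n) (x : 'cV[R]_n) : R := (x^T *m Q *m x) ord0 ord0.

Definition posdef (Q : 'M[R]_n) : Prop := forall x : 'cV[R]_n, x != 0 -> 0 < quadf Q x.

Definition reward (Rc : R) (Q : 'M[R]_n) (x : 'cV[R]_n) (u : 'cV[R]_m) : R :=
  Rc - quadf Q x.

Fixpoint Psi (f : 'cV[R]_n -> 'cV[R]_m -> 'cV[R]_n) (k : nat) (x0 : 'cV[R]_n)
  (u : nat -> 'cV[R]_m) : 'cV[R]_n :=
  match k with
  | 0 => x0
  | k'.+1 => f (Psi f k' x0 u) (u k')
  end.

Definition admissible (U : set 'cV[R]_m) (u : nat -> 'cV[R]_m) : Prop :=
  forall k, U (u k).

(* J^u_gamma(x0) = sum_{k>=0} gamma^k r(Psi(k,x0,u), u_k), as the limit of the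
   partial sums in the extended reals (it always exists since r <= Rc). *)
Definition Jcost (f : 'cV[R]_n -> 'cV[R]_m -> 'cV[R]_n) (Rc : R) (Q : 'M[R]_n)
  (gamma : R) (x0 : 'cV[R]_n) (u : nat -> 'cV[R]_m) : \bar R :=
  lim ((fun N : nat => \sum_(k < N)
          ((gamma ^+ k * reward Rc Q (Psi f k x0 u) (u k))%:E)) @ \oo).

Definition Vval (f : 'cV[R]_n -> 'cV[R]_m -> 'cV[R]_n) (U : set 'cV[R]_m)
  (Rc : R) (Q : 'M[R]_n) (gamma : R) (x0 : 'cV[R]_n) : \bar R :=
  ereal_sup [set Jcost f Rc Q gamma x0 u | u in admissible U].

Fixpoint clx (f : 'cV[R]_n -> 'cV[R]_m -> 'cV[R]_n) (pi : 'cV[R]_n -> 'cV[R]_m)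
  (x0 : 'cV[R]_n) (k : nat) : 'cV[R]_n :=
  match k with
  | 0 => x0
  | k'.+1 => f (clx f pi x0 k') (pi (clx f pi x0 k'))
  end.

Definition optimal_policy (f : 'cV[R]_n -> 'cV[R]_m -> 'cV[R]_n) (U : set 'cV[R]_m)
  (Rc : R) (Q : 'M[R]_n) (gamma : R) (pi : 'cV[R]_n -> 'cV[R]_m) : Prop :=
  (forall x, U (pi x)) /\
  forall x0, Jcost f Rc Q gamma x0 (fun k => pi (clx f pi x0 k))
             = Vval f U Rc Q gamma x0.

Definition asymp_stable (f : 'cV[R]_n -> 'cV[R]_m -> 'cV[R]_n)
  (pi : 'cV[R]_n -> 'cV[R]_m) : Prop :=
  (forall eps : R, 0 < eps -> exists2 delta : R, 0 < delta &
     forall x0, enorm x0 < delta -> forall k, enorm (clx f pi x0 k) < eps) /\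
  (exists2 rho : R, 0 < rho &
     forall eps : R, 0 < eps -> exists N : nat,
       forall x0, enorm x0 < rho -> forall k, (N <= k)%N -> enorm (clx f pi x0 k) < eps).

End ControlDefs.

(* Main.v *)
Require Import Defs.
From HB Require Import structures.
From mathcomp Require Import all_boot all_order all_algebra.
From mathcomp Require Import all_classical all_reals all_analysis.
From mathcomp Require Import ring lra.
Import Order.TTheory GRing.Theory Num.Theory numFieldTopology.Exports numFieldNormedType.Exports.
Local Open Scope classical_set_scope.
Local Open Scope ring_scope.
Section L.
Variable (R : realType).

Lemma quadf0 n (Q : 'M[R]_n) : quadf Q 0 = 0.
Proof. by rewrite /quadf mulmx0 mxE. Qed.

Lemma quadfZ n (Q : 'M[R]_n) (c : R) x : quadf Q (c *: x) = c ^+ 2 * quadf Q x.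
Proof.
rewrite /quadf linearZ /=.
have -> : (c *: x)^T = c *: x^T by apply/matrixP=> i j; rewrite !mxE.
by rewrite -!scalemxAl !mxE mulrA expr2.
Qed.

Lemma quadf_ge0 n (Q : 'M[R]_n) x : posdef Q -> 0 <= quadf Q x.
Proof.
move=> pQ; have [->|x0] := eqVneq x 0; first by rewrite quadf0.
exact/ltW/pQ.
Qed.

Lemma quadfE n (Q : 'M[R]_n) x :
  quadf Q x = \sum_j (\sum_i x i ord0 * Q i j) * x j ord0.
Proof.
rewrite /quadf !mxE; apply: eq_bigr => j _; rewrite !mxE; congr (_ * _).
by apply: eq_bigr => i _; rewrite !mxE.
Qed.

Lemma sum_cont (T : topologicalType) (I : Type) (s : seq I) (F : I -> T -> R) :
  (forall i, continuous (F i)) -> continuous (fun v => \sum_(i <- s) F i v).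
Proof.
move=> Fc; elim: s => [|a s IH].
  have -> : (fun v => \sum_(i <- [::]) F i v) = fun=> 0.
    by apply/funext => v; rewrite big_nil.
  exact: cst_continuous.
have -> : (fun v => \sum_(i <- a :: s) F i v) = (F a) + (fun v => \sum_(i <- s) F i v).
  by apply/funext => v; rewrite big_cons.
move=> x; apply: continuousD; [exact: Fc | exact: IH].
Qed.

Lemma contM (T : topologicalType) (f g : T -> R) :
  continuous f -> continuous g -> continuous (fun v => f v * g v).
Proof. by move=> fc gc x; apply: cvgM; [exact: fc|exact: gc]. Qed.

Lemma entry_le_norm n (v : 'rV[R]_n) i : `|v ord0 i| <= `|v|.
Proof.
have /mapP[j Hj ->] : `|v ord0 i| \in [seq `|v x.1 x.2| | x : 'I_1 * 'I_n].
  by apply/mapP; exists (ord0, i) => //=; rewrite mem_enum.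
by rewrite [leRHS]/Num.norm /= mx_normrE; apply/bigmax_geP; right => /=; exists j.
Qed.

End L.
Section L2.
Variable (R : realType).
Lemma quad_lb n (Q : 'M[R]_n) : posdef Q ->
  exists2 lam : R, 0 < lam & forall x, lam * enorm x ^+ 2 <= quadf Q x.
Proof.
case: n Q => [|k] Q pQ.
  exists 1 => // x; rewrite /enorm big_ord0 sqrtr0 expr0n /= mulr0.
  exact: quadf_ge0.
pose g (v : 'rV[R]_k.+1) := quadf Q v^T.
have gc : continuous g.
  have -> : g = fun v => \sum_(j <- index_enum 'I_k.+1)
      (\sum_(i <- index_enum 'I_k.+1) v ord0 i * Q i j) * v ord0 j.
    apply/funext => v; rewrite /g quadfE; apply: eq_bigr => j _.
    by rewrite mxE; congr (_ * _); apply: eq_bigr => i _; rewrite mxE.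
  apply: sum_cont => j; apply: contM; last exact: coord_continuous.
apply: sum_cont => i.
  apply: contM; [exact: coord_continuous | exact: cst_continuous].
pose A := [set v : 'rV[R]_k.+1 | `|v| = 1].
have A0 : A !=set0.
  pose v1 : 'rV[R]_k.+1 := const_mx 1.
  have v10 : v1 != 0.
    apply/eqP => /matrixP /(_ ord0 ord0); rewrite !mxE => /eqP.
    by rewrite oner_eq0.
  by exists (`|v1|^-1 *: v1); rewrite /A /= normfZV.
have cA : compact A.
  apply: bounded_closed_compact.
    exists 1; split => [|M M1 v /= ->]; [exact: num_real | exact: ltW].
  have -> : A = Num.norm @^-1` [set 1 : R] by [].
  apply: preimage_closed; last exact: closed_eq.
  by move=> x _; exact: norm_continuous.
have [c cA' minc] := EVT_min_rV A0 cA (continuous_subspaceT gc).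
have c1 : `|c| = 1 by move: cA'; rewrite inE.
have mu0 : 0 < g c.
  apply: pQ; apply/eqP => cT0.
  have : c = 0 by rewrite -(trmxK c) cT0 linear0.
  by move=> c0; move: c1; rewrite c0 normr0 => /eqP; rewrite eq_sym oner_eq0.
exists (g c / k.+1%:R); first by rewrite divr_gt0.
move=> x; pose v := x^T.
have H1 : enorm x ^+ 2 <= k.+1%:R * `|v| ^+ 2.
  rewrite /enorm sqr_sqrtr; last by apply: sumr_ge0 => i _; exact: sqr_ge0.
  rewrite mulr_natl.
  have -> : `|v| ^+ 2 *+ k.+1 = \sum_(i < k.+1) `|v| ^+ 2.
    by rewrite sumr_const card_ord.
  apply: ler_sum => i _.
  have -> : x i ord0 = v ord0 i by rewrite mxE.
  rewrite -real_normK ?num_real // !expr2.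
  by apply: ler_pM => //; exact: entry_le_norm.
have H2 : g c * `|v| ^+ 2 <= quadf Q x.
  have -> : quadf Q x = g v by rewrite /g trmxK.
  have [->|v0] := eqVneq v 0.
    by rewrite normr0 expr0n /= mulr0 /g linear0 quadf0.
  have tA : (`|v|^-1 *: v) \in A by rewrite inE /A /= normfZV.
  have := minc _ tA.
  have -> : g (`|v|^-1 *: v) = `|v|^-1 ^+ 2 * g v.
    rewrite /g -quadfZ; congr quadf; apply/matrixP => i j; rewrite !mxE //.
  have nv0 : 0 < `|v| by rewrite normr_gt0.
  rewrite exprVn => H.
  by rewrite -ler_pdivlMr ?exprn_gt0 // mulrC.
apply: le_trans H2.
rewrite mulrAC ler_pdivrMr ?ltr0Sn //.
by rewrite -mulrA ler_pM2l // mulrC.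
Qed.
End L2.
Section L3.
Variable (R : realType).
Lemma partial_bound (g Rc B : R) (r q : nat -> R) :
  0 < g < 1 -> (forall k, 0 <= q k) -> (forall k, r k = Rc - q k) ->
  ((Rc / (1 - g))%:E - lim ((fun N : nat => \sum_(k < N) ((g ^+ k * r k)%:E)) @ \oo)
    <= B%:E)%E ->
  forall N, \sum_(k < N) g ^+ k * q k <= B.
Proof.
move=> /andP[g0 g1] q0 rq HB N0.
pose a N := (\sum_(k < N) g ^+ k * Rc)%R.
pose P N := (\sum_(k < N) g ^+ k * q k)%R.
have ha : (fun N => (a N)%:E) @ \oo --> (Rc / (1 - g))%:E.
  apply: cvg_EFin; first by apply: nearW.
  have -> : fine \o (fun N => (a N)%:E) = series (geometric Rc g).
    apply/funext => N /=; rewrite /series /= /a big_mkord.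
    by apply: eq_bigr => k _; rewrite mulrC.
  by apply: cvg_geometric_series; rewrite ger0_norm // ltW.
pose l := ereal_inf (range (fun N => (- P N)%:E)).
have hP : (fun N => (- P N)%:E) @ \oo --> l.
  apply: ereal_nonincreasing_cvgn => m n mn; rewrite lee_fin lerN2.
  rewrite /P -(subnKC mn) big_split_ord /= lerDl.
  by apply: sumr_ge0 => k _; apply: mulr_ge0 => //; apply: exprn_ge0; exact: ltW.
have hS : (fun N : nat => \sum_(k < N) ((g ^+ k * r k)%:E)) @ \oo --> ((Rc / (1 - g))%:E + l)%E.
  have -> : (fun N : nat => \sum_(k < N) ((g ^+ k * r k)%:E)) =
          ((fun N => (a N)%:E) \+ (fun N => (- P N)%:E))%E.
    apply/funext => N /=; rewrite sumEFin -EFinD; congr (_%:E).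
    rewrite /a /P -sumrN -big_split /=; apply: eq_bigr => k _.
    by rewrite rq mulrBr.
  by apply: cvgeD => //; exact: fin_num_adde_defr.
rewrite (cvg_lim (@ereal_hausdorff R) hS) in HB.
have lP : (l <= (- P N0)%:E)%E by apply: ereal_inf_lbound; exists N0.
move: l lP HB {hP hS} => [x| |] /=.
- rewrite lee_fin -EFinD lee_fin => xP xB.
  have : - x <= B by move: xB; rewrite opprD addrA subrr add0r.
  rewrite /P in xP; lra.
- by [].
- by [].
Qed.
End L3.
Section L5.
Variable (R : realType) (n m : nat).
Variables (f : 'cV[R]_n -> 'cV[R]_m -> 'cV[R]_n) (pi : 'cV[R]_n -> 'cV[R]_m).

Lemma clx_shift x0 k j : clx f pi (clx f pi x0 k) j = clx f pi x0 (k + j).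
Proof. by elim: j => [|j IH] /=; rewrite ?addn0 ?addnS //= IH. Qed.

Lemma Psi_clx x0 k : Psi f k x0 (fun k => pi (clx f pi x0 k)) = clx f pi x0 k.
Proof. by elim: k => [|k IH] //=; rewrite IH. Qed.

Lemma core (Q : 'M[R]_n) (lam A g : R) :
  0 < lam -> lam <= A -> 0 < g ->
  (forall x, lam * enorm x ^+ 2 <= quadf Q x) ->
  (forall y N, \sum_(j < N) g ^+ j * quadf Q (clx f pi y j) <= A * enorm y ^+ 2) ->
  forall x0 k, lam * enorm (clx f pi x0 k) ^+ 2 <=
     ((1 - lam / A) / g) ^+ k * (A * enorm x0 ^+ 2).
Proof.
move=> lam0 lamA g0 qlb F3 x0.
have A0 : 0 < A by apply: lt_le_trans lamA.
pose d := 1 - lam / A.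
have d0 : 0 <= d by rewrite subr_ge0 ler_pdivrMr // mul1r.
pose T k N := \sum_(j < N) g ^+ j * quadf Q (clx f pi (clx f pi x0 k) j).
pose M := A * enorm x0 ^+ 2.
have TS : forall k N, T k N.+1 = quadf Q (clx f pi x0 k) + g * T k.+1 N.
  move=> k N; rewrite /T big_ord_recl expr0 mul1r; congr (_ + _).
  rewrite mulr_sumr; apply: eq_bigr => j _.
  have -> : (lift ord0 j : nat) = j.+1 by [].
  rewrite exprS -mulrA; congr (_ * (_ * quadf Q _)).
  by rewrite !clx_shift addSnnS.
have key : forall k N, T k N <= (d / g) ^+ k * M.
  elim=> [|k IH] N.
    rewrite expr0 mul1r /T /M; exact: F3.
  have h1 := TS k N.
  have h2 := IH N.+1.
  have h3 : lam * T k N.+1 <= A * quadf Q (clx f pi x0 k).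
    apply: le_trans (_ : lam * (A * enorm (clx f pi x0 k) ^+ 2) <= _).
      by rewrite ler_pM2l //; exact: F3.
    by rewrite mulrCA ler_pM2l //; exact: qlb.

  have h4 : g * T k.+1 N <= d * T k N.+1.
    have h5 : lam / A * T k N.+1 <= quadf Q (clx f pi x0 k).
      by rewrite mulrAC ler_pdivrMr // [_ * A]mulrC.
    rewrite /d mulrBl mul1r; lra.
  have h6 : d * T k N.+1 <= d * ((d / g) ^+ k * M) by rewrite ler_wpM2l.
  rewrite exprS -mulrA mulrAC ler_pdivlMr // mulrC; exact: le_trans h4 h6.
move=> k; have := key k 1; rewrite /T big_ord1 expr0 mul1r /= => h.
by apply: le_trans h; exact: qlb.
Qed.
End L5.
Lemma sq_lt (R : realType) (a b : R) : 0 <= a -> 0 <= b -> a ^+ 2 < b ^+ 2 -> a < b.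
Proof.
move=> a0 b0 h; rewrite ltNge; apply/negP => ba; move: h.
by rewrite ltNge !expr2 (ler_pM b0 b0 ba ba).
Qed.
Lemma enorm_ge0 {R : realType} {n} (x : 'cV[R]_n) : 0 <= enorm x.
Proof. exact: sqrtr_ge0. Qed.

Theorem theorem1 (R : realType) (n m : nat)
  (f : 'cV[R]_n -> 'cV[R]_m -> 'cV[R]_n) (U : set 'cV[R]_m)
  (Rc : R) (Q : 'M[R]_n) :
  (* origin is an equilibrium *)
  (exists2 u0 : 'cV[R]_m, U u0 & f 0 u0 = 0) ->
  0 < Rc -> posdef Q ->
  (* (A1) Lipschitz continuity *)
  (exists Lx Lu : R, forall (x y : 'cV[R]_n) (u w : 'cV[R]_m), U u -> U w ->
     enorm (f x u - f y w) <= Lx * enorm (x - y) + Lu * enorm (u - w)) ->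
  (* (A2) existence of optimal control sequences *)
  (forall gamma : R, 0 < gamma < 1 -> forall x0 : 'cV[R]_n,
     exists2 u : nat -> 'cV[R]_m, admissible U u &
       Jcost f Rc Q gamma x0 u = Vval f U Rc Q gamma x0) ->
  (* (A3) *)
  (exists aV : R, forall gamma : R, 0 < gamma < 1 -> forall x : 'cV[R]_n,
     ((Rc / (1 - gamma))%:E - Vval f U Rc Q gamma x <= (aV * enorm x ^+ 2)%:E)%E) ->
  exists2 gstar : R, 0 < gstar < 1 &
    forall gamma : R, gstar < gamma < 1 ->
      forall pi : 'cV[R]_n -> 'cV[R]_m,
        optimal_policy f U Rc Q gamma pi -> asymp_stable f pi.
Proof.
move=> _ Rc0 pQ _ _ [aV HA3].
have [lam lam0 qlb] := @quad_lb R n Q pQ.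
pose A := Num.max aV lam.
have lamA : lam <= A by rewrite le_max lexx orbT.
have aVA : aV <= A by rewrite le_max lexx.
have A0 : 0 < A by apply: lt_le_trans lamA.
pose t := lam / A.
have t0 : 0 < t by rewrite divr_gt0.
have t1 : t <= 1 by rewrite ler_pdivrMr // mul1r.
exists (1 - t / 2); first by apply/andP; split; lra.
move=> gamma /andP[gs g1] pi [piU popt].
have g0 : 0 < gamma by lra.
have F3 : forall y N, \sum_(j < N) gamma ^+ j * quadf Q (clx f pi y j) <= A * enorm y ^+ 2.
  move=> y N.
  have H := HA3 gamma (introT andP (conj g0 g1)) y.
  rewrite -(popt y) /Jcost in H.
  apply: le_trans (_ : aV * enorm y ^+ 2 <= _); last by rewrite ler_wpM2r // sqr_ge0.
  apply: (@partial_bound R gamma Rc _ (fun k => reward Rc Q (Psi f k y (fun k => pi (clx f pi y k))) (pi (clx f pi y k))) (fun k => quadf Q (clx f pi y k)) _ _ _ H).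
  - by rewrite g0 g1.
  - by move=> k; exact: quadf_ge0.
  - by move=> k; rewrite /reward Psi_clx.
have Hc := @core R n m f pi Q lam A gamma lam0 lamA g0 qlb F3.
pose rho := (1 - lam / A) / gamma.
have rho0 : 0 <= rho by rewrite divr_ge0 // ?(ltW g0) // subr_ge0 -/t.
have rho1 : rho < 1 by rewrite ltr_pdivrMr // mul1r -/t; lra.
pose c := A / lam.
have c1 : 1 <= c by rewrite ler_pdivlMr // mul1r.
have bound : forall x0 k, enorm (clx f pi x0 k) ^+ 2 <= rho ^+ k * c * enorm x0 ^+ 2.
  move=> x0 k; have := Hc x0 k; rewrite -/rho => h.
  rewrite -(ler_pM2l lam0); apply: (le_trans h).
  have lamn0 : lam != 0 by rewrite gt_eqF.
  have -> : lam * (rho ^+ k * c * enorm x0 ^+ 2) = rho ^+ k * (A * enorm x0 ^+ 2).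
    by rewrite /c; field.
  by [].
split.
- move=> eps eps0; exists (eps / c); first by rewrite divr_gt0 // (lt_le_trans ltr01 c1).
  move=> x0 hx k; apply: sq_lt; [exact: enorm_ge0 | exact: ltW |].
  have e00 := enorm_ge0 x0.
  have ce : c * enorm x0 < eps by rewrite mulrC -ltr_pdivlMr // (lt_le_trans ltr01 c1).
  have rk : rho ^+ k <= 1 by rewrite exprn_ile1 // ltW.
  apply: le_lt_trans (bound x0 k) _.
  have h1 : rho ^+ k * c * enorm x0 ^+ 2 <= c * enorm x0 ^+ 2.
    rewrite ler_wpM2r ?sqr_ge0 //; rewrite -[leRHS]mul1r ler_wpM2r //.
    exact: le_trans ler01 c1.
  apply: le_lt_trans h1 _.
  have h2 : c * enorm x0 ^+ 2 <= (c * enorm x0) ^+ 2.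
    rewrite exprMn ler_wpM2r ?sqr_ge0 // expr2 -[leLHS]mul1r ler_wpM2r //.
    exact: le_trans ler01 c1.
  apply: le_lt_trans h2 _.
  by rewrite ltrXn2r // mulr_ge0 // (le_trans ler01 c1).
- exists 1 => // eps eps0.
  have ce0 : 0 < eps ^+ 2 / c by rewrite divr_gt0 ?exprn_gt0 // (lt_le_trans ltr01 c1).
  have hr : `|rho| < 1 by rewrite ger0_norm.
  have [N _ HN] := cvgr_dist_lt _ _ (cvg_expr hr) _ ce0.
  exists N => x0 hx k hk.
  apply: sq_lt; [exact: enorm_ge0 | exact: ltW |].
  have e00 := enorm_ge0 x0.
  have rN : rho ^+ N < eps ^+ 2 / c.
    by have := HN N (leqnn N); rewrite /= sub0r normrN ger0_norm // exprn_ge0.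
  have rk : rho ^+ k <= rho ^+ N by apply: ler_wiXn2l => //; exact: ltW.
  apply: le_lt_trans (bound x0 k) _.
  have e1 : enorm x0 ^+ 2 <= 1.
    by rewrite expr_le1 // ltW.
  have c0 : 0 < c by exact: lt_le_trans ltr01 c1.
  apply: (@le_lt_trans _ _ (rho ^+ N * c)).
    rewrite -[leRHS]mulr1; apply: ler_pM => //.
    - by rewrite mulr_ge0 // ?exprn_ge0 // ltW.
    - exact: sqr_ge0.
    - by rewrite ler_wpM2r // ltW.
  by rewrite -ltr_pdivlMr.
Qed.
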